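(* Let $x$ be a grid function with $x_s\neq0$ at every node that satisfies the scheme (S) with $\check B=\frac{2(\cos\tau-1)}{\tau^2}\,x$ (discretization for the parabolic bottom $b(x)=-x^2/2$). Then at every node $$\Big(x_t\sin t-x\,\frac{\sin\hat t-\sin t}{\tau}\Big)_{\check t}+\Big(\sin t\,\big((\hat x_s\check x_s)^{-1}-\alpha^2x_s\big)\Big)_{\bar s}=0,$$ where $t$ is the time coordinate of the node and $\hat t=t+\tau$.
   Context: Fix mesh steps $\tau>0$, $h>0$ and a constant $\alpha\in\mathbb R$. A grid function is a real-valued function $f=f(t,s)$ on the uniform orthogonal mesh $\{(n\tau,kh): n,k\in\mathbb Z\}$; at the node $(n\tau,kh)$ the symbol $t$ denotes the number $n\tau$. Shifts: $\hat f=f(t+\tau,s)$, $\check f=f(t-\tau,s)$, $f_+=f(t,s+h)$, $f_-=f(t,s-h)$; a shift applied to a composite expression shifts the whole expression, including explicit occurrences of $t$ (e.g. $\hat x_s$ is $x_s$ evaluated at $(t+\tau,s)$). Differences: $f_t=(\hat f-f)/\tau$, $f_{\check t}=(f-\check f)/\tau$, $f_s=(f_+-f)/h$, $f_{\bar s}=(f-f_-)/h$; iterated differences compose, e.g. $x_{t\check t}=(x_t)_{\check t}=(\hat x-2x+\check x)/\tau^2$ and $x_{s\bar s}=(x_s)_{\bar s}=(x_+-2x+x_-)/h^2$. Given a grid function $x$ with $x_s\neq0$ everywhere and a grid function $\check B$ (an approximation of the bottom-slope term), the scheme (S) is the requirement that at every node $$x_{t\check t}-\alpha^2x_{s\bar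 s}+\Big(\frac{1}{\hat x_s\check x_s}\Big)_{\bar s}-\check B=0 .$$ *)

(* Defs.v *)
From Stdlib Require Import Reals ZArith.
Open Scope R_scope.

(* A grid function on the mesh {(n tau, k h) : n,k in Z} is represented
   by its values at integer indices: f n k = f(n tau, k h). *)
Definition grid := Z -> Z -> R.

Definition hat   (f : grid) : grid := fun n k => f (n + 1)%Z k.
Definition check (f : grid) : grid := fun n k => f (n - 1)%Z k.
Definition splus (f : grid) : grid := fun n k => f n (k + 1)%Z.
Definition sminus (f : grid) : grid := fun n k => f n (k - 1)%Z.

Definition d_t    (tau : R) (f : grid) : grid := fun n k => (hat f n k - f n k) / tau.
Definition d_tb   (tau : R) (f : grid) : grid := fun n k => (f n k - check f n k) / tau.
Definition d_s    (h : R) (f : grid) : grid := fun n k => (splus f n k - f n k) / h.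
Definition d_sb   (h : R) (f : grid) : grid := fun n k => (f n k - sminus f n k) / h.

Definition tgrid (tau : R) : grid := fun n _ => IZR n * tau.

Definition scheme (tau h alpha : R) (x Bc : grid) : Prop :=
  forall n k,
    d_tb tau (d_t tau x) n k - alpha ^ 2 * d_sb h (d_s h x) n k
    + d_sb h (fun n' k' => / (hat (d_s h x) n' k' * check (d_s h x) n' k')) n k
    - Bc n k = 0.

(* Main.v *)
Require Import Defs.
From Stdlib Require Import Reals ZArith Lra.
Open Scope R_scope.

Theorem mainTheorem7 (tau h alpha : R) (x : grid) :
  0 < tau -> 0 < h ->
  (forall n k, d_s h x n k <> 0) ->
  scheme tau h alpha x
    (fun n k => 2 * (cos tau - 1) / tau ^ 2 * x n k) ->
  forall n k,
    d_tb tau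
      (fun n' k' =>
         d_t tau x n' k' * sin (tgrid tau n' k')
         - x n' k' * (sin (hat (tgrid tau) n' k') - sin (tgrid tau n' k')) / tau)
      n k
    + d_sb h
      (fun n' k' =>
         sin (tgrid tau n' k')
         * (/ (hat (d_s h x) n' k' * check (d_s h x) n' k')
            - alpha ^ 2 * d_s h x n' k'))
      n k
    = 0.
Proof.
  intros Ht Hh Hnz Hs n k.
  pose proof (Hs n k) as E.
  unfold d_tb, d_t, d_sb, d_s, hat, check, splus, sminus, tgrid in *.
  rewrite Z.sub_add in *.
  rewrite plus_IZR, minus_IZR in *.
  replace ((IZR n + 1) * tau) with (IZR n * tau + tau) by ring.
  replace ((IZR n - 1) * tau) with (IZR n * tau - tau) by ring.
  rewrite sin_plus, sin_minus.
  set (c := cos tau) in *. set (s := sin tau).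
  set (S := sin (IZR n * tau)). set (C := cos (IZR n * tau)).
  set (A := / (((x (n + 1)%Z (k + 1)%Z - x (n + 1)%Z k) / h) *
               ((x (n - 1)%Z (k + 1)%Z - x (n - 1)%Z k) / h))) in *.
  set (B := / (((x (n + 1)%Z (k - 1 + 1)%Z - x (n + 1)%Z (k - 1)%Z) / h) *
               ((x (n - 1)%Z (k - 1 + 1)%Z - x (n - 1)%Z (k - 1)%Z) / h))) in *.
  replace 0 with (S * 0) by ring.
  rewrite <- E.
  field; lra.
Qed.
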